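(* Under the hypotheses and notation of Theorem 1 (synchronous HSAG with the stated $\gamma,\theta$, conditions $\frac1\kappa+2Lc\eta^2(1+\frac1\beta)\le\frac1n$, $\gamma>0$, $\theta<1$, and $p_j\propto(1-\frac1\kappa)^{m-j}$), suppose moreover that $\bar\theta:=\theta(1+1/\gamma)<1$. Then for all $k\ge 0$, $$\mathbb{E}\big[f(\tilde x^{k})-f(x^* )\big]\le\bar\theta^{\,k}\,\big[f(x^0)-f(x^* )\big].$$
   Context: Setting: $f_1,\dots,f_n:\mathbb{R}^d\to\mathbb{R}$ convex, differentiable, each with $L$-Lipschitz gradient; $f=\frac1n\sum_i f_i$ is $\lambda$-strongly convex with minimizer $x^*$; $S\subseteq[n]$; $c>0,\beta>0,\kappa>1$, $\eta>0$, $m\ge1$; $\gamma=\kappa[1-(1-\frac1\kappa)^m](2c\eta(1-L\eta(1+\beta))-\frac1n-\frac{2c}{\kappa\lambda})$ and $\theta=\max\{\frac{2c}{\gamma\lambda}(1-\frac1\kappa)^m+\frac{2Lc\eta^2}{\gamma}(1+\frac1\beta)\kappa[1-(1-\frac1\kappa)^m],\ (1-\frac1\kappa)^m\}$. Synchronous HSAG algorithm: $x^0\in\mathbb{R}^d$, $\tilde x^0=x^0$, $\alpha_i^0=x^0$. Epoch $k+1$ consists of steps $t=km,\dots,km+m-1$ with $x^{km}=\tilde x^k$. At step $t$, $i_t$ is uniform on $[n]$ independent of the past and $x^{t+1}=x^t-\eta(\nabla f_{i_t}(x^t)-\nabla f_{i_t}(\alpha_{i_t}^t)+\frac1n\sum_i\nabla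 f_i(\alpha_i^t))$. For $i\in S$: $\alpha_i^{t+1}=x^t$ if $i_t=i$, else $\alpha_i^{t+1}=\alpha_i^t$; for $i\notin S$: $\alpha_i^t=\tilde x^k$ throughout epoch $k+1$. At epoch end, $\tilde x^{k+1}$ is chosen from $\{x^{km},\dots,x^{km+m-1}\}$, picking $x^{km+j-1}$ with probability $p_j$, and $x^{(k+1)m}:=\tilde x^{k+1}$. *)

(* Defs.v *)
From Stdlib Require Import Reals Lra List.
From Stdlib Require Vectors.Fin.
Open Scope R_scope.

Definition vec (d : nat) : Type := Fin.t d -> R.

Fixpoint fsum (d : nat) : (Fin.t d -> R) -> R :=
  match d return (Fin.t d -> R) -> R with
  | O => fun _ => 0
  | Datatypes.S d' => fun u => u Fin.F1 + fsum d' (fun i => u (Fin.FS i))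
  end.

Definition vadd {d} (x y : vec d) : vec d := fun c => x c + y c.
Definition vsub {d} (x y : vec d) : vec d := fun c => x c - y c.
Definition vscale {d} (a : R) (x : vec d) : vec d := fun c => a * x c.
Definition inner {d} (x y : vec d) : R := fsum d (fun c => x c * y c).
Definition vnorm {d} (x : vec d) : R := sqrt (inner x x).

Fixpoint rsum (n : nat) (F : nat -> R) : R :=
  match n with
  | O => 0
  | Datatypes.S n' => rsum n' F + F n'
  end.

Definition vsumn {d} (n : nat) (F : nat -> vec d) : vec d :=
  fun c => rsum n (fun l => F l c).

Definition is_gradient {d} (f : vec d -> R) (g : vec d -> vec d) : Prop :=
  forall x : vec d, forall eps, 0 < eps -> exists delta, 0 < delta /\
    forall h : vec d, vnorm h < delta ->
      Rabs (f (vadd x h) - f x - inner (g x) h) <= eps * vnorm h.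

Definition convex {d} (f : vec d -> R) : Prop :=
  forall (x y : vec d) (t : R), 0 <= t <= 1 ->
    f (vadd (vscale t x) (vscale (1 - t) y)) <= t * f x + (1 - t) * f y.

Definition strongly_convex {d} (lam : R) (f : vec d -> R) : Prop :=
  forall (x y : vec d) (t : R), 0 <= t <= 1 ->
    f (vadd (vscale t x) (vscale (1 - t) y))
      <= t * f x + (1 - t) * f y - lam / 2 * t * (1 - t) * (vnorm (vsub x y)) ^ 2.

Definition lipschitz_map {d} (L : R) (g : vec d -> vec d) : Prop :=
  forall x y : vec d, vnorm (vsub (g x) (g y)) <= L * vnorm (vsub x y).

Definition favg {d} (n : nat) (fs : nat -> vec d -> R) (x : vec d) : R :=
  / INR n * rsum n (fun i => fs i x).

Definition hsag_gamma (n m : nat) (L lam c beta kappa eta : R) : R :=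
  kappa * (1 - (1 - / kappa) ^ m) *
    (2 * c * eta * (1 - L * eta * (1 + beta)) - / INR n - 2 * c / (kappa * lam)).

Definition hsag_theta (n m : nat) (L lam c beta kappa eta : R) : R :=
  let g := hsag_gamma n m L lam c beta kappa eta in
  Rmax (2 * c / (g * lam) * (1 - / kappa) ^ m
        + 2 * L * c * eta ^ 2 / g * (1 + / beta) * kappa * (1 - (1 - / kappa) ^ m))
       ((1 - / kappa) ^ m).

(** Epoch-end selection probabilities p_j, j = 1..m, p_j proportional to (1-1/kappa)^(m-j). *)
Definition hsag_p (kappa : R) (m j : nat) : R :=
  (1 - / kappa) ^ (m - j) / rsum m (fun l => (1 - / kappa) ^ (m - (l + 1))).

Definition step_x {d} (n : nat) (eta : R) (g : nat -> vec d -> vec d)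
    (al : nat -> vec d) (x : vec d) (i : nat) : vec d :=
  vsub x (vscale eta (vadd (vsub (g i x) (g i (al i)))
                           (vscale (/ INR n) (vsumn n (fun l => g l (al l)))))).

Definition step_al {d} (Sset : nat -> bool) (al : nat -> vec d) (x : vec d) (i : nat)
    : nat -> vec d :=
  fun l => if andb (Sset l) (Nat.eqb l i) then x else al l.

(** Exact expectation over one epoch of r remaining inner steps (i_t uniform on
    {0..n-1}, independent), with continuation K receiving the list of iterates
    [x^{km}; ...; x^{km+m-1}] and the final table alpha^{(k+1)m}. *)
Fixpoint epoch_E {d} (n : nat) (eta : R) (g : nat -> vec d -> vec d)
    (Sset : nat -> bool) (r : nat) (x : vec d) (al : nat -> vec d)
    (hist : list (vec d)) (K : list (vec d) -> (nat -> vec d) -> R) : R :=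
  match r with
  | O => K hist al
  | Datatypes.S r' =>
      / INR n * rsum n (fun i =>
        epoch_E n eta g Sset r' (step_x n eta g al x i) (step_al Sset al x i)
                (hist ++ x :: nil) K)
  end.

(** hsag_E k xt al Phi = E[Phi(tilde x^{k})] for the synchronous HSAG process
    started from snapshot xt and table al (entries for i in S are carried over,
    entries for i not in S are reset to the snapshot at each epoch start);
    tilde x^{k+1} = x^{km+j-1} with probability p_j, independently of the i_t. *)
Fixpoint hsag_E {d} (n m : nat) (eta kappa : R) (g : nat -> vec d -> vec d)
    (Sset : nat -> bool) (Phi : vec d -> R) (k : nat) (xt : vec d) (al : nat -> vec d) : R :=
  match k with
  | O => Phi xt
  | Datatypes.S k' =>
      epoch_E n eta g Sset m xt (fun l => if Sset l then al l else xt) nil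
        (fun hist al' =>
           rsum m (fun l => hsag_p kappa m (l + 1) *
                            hsag_E n m eta kappa g Sset Phi k' (nth l hist xt) al'))
  end.

(* Main.v *)
Require Import Defs.
From Stdlib Require Import Reals Lra Lia List FunctionalExtensionality.
From Coquelicot Require Import Coquelicot.
Import Defs.
Open Scope R_scope.

Lemma fsum_ext d (u w : Fin.t d -> R) : (forall c, u c = w c) -> fsum d u = fsum d w.
Proof. intro H. induction d; simpl; auto. rewrite H. f_equal. apply IHd; auto. Qed.

Lemma fsum_add d (u w : Fin.t d -> R) : fsum d (fun c => u c + w c) = fsum d u + fsum d w.
Proof. induction d; simpl; [ring|]. rewrite (IHd (fun i => u (Fin.FS i)) (fun i => w (Fin.FS i))). ring. Qed.

Lemma fsum_scale d a (u : Fin.t d -> R) : fsum d (fun c => a * u c) = a * fsum d u.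
Proof. induction d; simpl; [ring|]. rewrite (IHd (fun i => u (Fin.FS i))). ring. Qed.

Lemma fsum_nonneg d (u : Fin.t d -> R) : (forall c, 0 <= u c) -> 0 <= fsum d u.
Proof. intro H. induction d; simpl; [lra|]. specialize (IHd (fun i => u (Fin.FS i))). 
  pose proof (H Fin.F1). assert (0 <= fsum d (fun i => u (Fin.FS i))) by (apply IHd; auto). lra. Qed.

Lemma fsum_zero d (u : Fin.t d -> R) : (forall c, 0 <= u c) -> fsum d u = 0 -> forall c, u c = 0.
Proof.
  induction d; intros H E c.
  - inversion c.
  - simpl in E. assert (0 <= fsum d (fun i => u (Fin.FS i))) by (apply fsum_nonneg; auto).
    pose proof (H Fin.F1).
    assert (u Fin.F1 = 0) by lra.
    assert (E2: fsum d (fun i => u (Fin.FS i)) = 0) by lra.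
    apply (Fin.caseS' c (fun c => u c = 0)); [exact H2 | intro p; apply (IHd (fun i => u (Fin.FS i))); auto].
Qed.

Definition sq {d} (u : vec d) := inner u u.

Lemma inner_sym d (u w : vec d) : inner u w = inner w u.
Proof. unfold inner. apply fsum_ext. intro; ring. Qed.

Lemma inner_add_l d (u v w : vec d) : inner (vadd u v) w = inner u w + inner v w.
Proof. unfold inner, vadd. rewrite <- fsum_add. apply fsum_ext; intro; ring. Qed.
Lemma inner_sub_l d (u v w : vec d) : inner (vsub u v) w = inner u w - inner v w.
Proof. unfold inner, vsub. replace (fsum d (fun c => u c * w c) - fsum d (fun c => v c * w c))
  with (fsum d (fun c => u c * w c) + (-1) * fsum d (fun c => v c * w c)) by ring.
  rewrite <- fsum_scale, <- fsum_add. apply fsum_ext; intro; ring. Qed.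
Lemma inner_scale_l d a (u w : vec d) : inner (vscale a u) w = a * inner u w.
Proof. unfold inner, vscale. rewrite <- fsum_scale. apply fsum_ext; intro; ring. Qed.
Lemma inner_add_r d (u v w : vec d) : inner w (vadd u v) = inner w u + inner w v.
Proof. rewrite !(inner_sym _ w). apply inner_add_l. Qed.
Lemma inner_sub_r d (u v w : vec d) : inner w (vsub u v) = inner w u - inner w v.
Proof. rewrite !(inner_sym _ w). apply inner_sub_l. Qed.
Lemma inner_scale_r d a (u w : vec d) : inner w (vscale a u) = a * inner w u.
Proof. rewrite !(inner_sym _ w). apply inner_scale_l. Qed.

Lemma sq_nonneg d (u : vec d) : 0 <= sq u.
Proof. unfold sq, inner. apply fsum_nonneg. intro; nra. Qed.

Lemma sq_zero d (u : vec d) : sq u = 0 -> u = (fun _ => 0).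
Proof. intro H. apply functional_extensionality. intro c.
  assert (u c * u c = 0). { apply (fsum_zero d (fun c => u c * u c)); auto. intro; nra. }
  nra. Qed.

Lemma inner_zero_l d (w : vec d) : inner (fun _ => 0) w = 0.
Proof. unfold inner. transitivity (0 * fsum d w). rewrite <- fsum_scale. apply fsum_ext; intro; ring. ring. Qed.

Lemma vnorm_sq d (u : vec d) : vnorm u ^ 2 = sq u.
Proof. unfold vnorm. simpl. rewrite Rmult_1_r. apply sqrt_sqrt. apply sq_nonneg. Qed.

Lemma vnorm_nonneg d (u : vec d) : 0 <= vnorm u.
Proof. apply sqrt_pos. Qed.

Lemma sq_sub d (u w : vec d) : sq (vsub u w) = sq u - 2 * inner u w + sq w.
Proof. unfold sq. rewrite inner_sub_l, !inner_sub_r, (inner_sym _ w u). ring. Qed.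

Lemma sq_add d (u w : vec d) : sq (vadd u w) = sq u + 2 * inner u w + sq w.
Proof. unfold sq. rewrite inner_add_l, !inner_add_r, (inner_sym _ w u). ring. Qed.

Lemma sq_scale d a (u : vec d) : sq (vscale a u) = a ^ 2 * sq u.
Proof. unfold sq. rewrite inner_scale_l, inner_scale_r. ring. Qed.

Lemma vnorm_scale d a (u : vec d) : vnorm (vscale a u) = Rabs a * vnorm u.
Proof. unfold vnorm. fold (sq (vscale a u)). fold (sq u). rewrite sq_scale.
  rewrite sqrt_mult_alt. f_equal. rewrite <- sqrt_Rsqr_abs. f_equal. unfold Rsqr. ring.
  apply pow2_ge_0. Qed.

Lemma young d (a w : vec d) (b : R) : 0 < b ->
  sq (vsub a w) <= (1 + b) * sq a + (1 + / b) * sq w.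
Proof. intro Hb. rewrite sq_sub.
  pose proof (sq_nonneg d (vadd (vscale b a) w)) as H. rewrite sq_add, sq_scale, inner_scale_l in H.
  assert (H2: - 2 * inner a w <= b * sq a + / b * sq w).
  { apply Rmult_le_reg_l with b; auto.
    replace (b * (b * sq a + / b * sq w)) with (b^2 * sq a + sq w) by (field; lra). nra. }
  lra. Qed.

Lemma lip_sq d L (g : vec d -> vec d) x y : lipschitz_map L g ->
  sq (vsub (g x) (g y)) <= L^2 * sq (vsub x y).
Proof. intro H. specialize (H x y). rewrite <- !vnorm_sq.
  pose proof (vnorm_nonneg d (vsub (g x) (g y))). pose proof (vnorm_nonneg d (vsub x y)).
  destruct (Rle_dec 0 L).
  - replace (L^2 * vnorm (vsub x y) ^2) with ((L * vnorm (vsub x y))^2) by ring.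
    apply pow_incr; lra.
  - assert (vnorm (vsub x y) = 0) by nra. assert (vnorm (vsub (g x) (g y)) = 0) by nra.
    rewrite H2, H3. lra.
Qed.

Lemma le_eps a b K : 0 <= K -> (forall eps, 0 < eps -> a <= b + eps * K) -> a <= b.
Proof. intros HK H. destruct (Rle_dec a b); auto.
  assert (Hp: 0 < (a - b) / (2 * (K + 1))) by (apply Rdiv_lt_0_compat; lra).
  specialize (H _ Hp).
  assert ((a - b) / (2 * (K + 1)) * K < a - b).
  { apply Rmult_lt_reg_r with (2*(K+1)); [lra|].
    replace ((a - b) / (2 * (K + 1)) * K * (2 * (K + 1))) with ((a-b)*K) by (field; lra). nra. }
  lra. Qed.

Lemma vec_eq d (u w : vec d) : (forall c, u c = w c) -> u = w.
Proof. intro; apply functional_extensionality; auto. Qed.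

Lemma dir_lemma d (f : vec d -> R) g x v eps : is_gradient f g -> 0 < eps ->
  exists t0, 0 < t0 <= 1 /\ forall t, 0 < t <= t0 ->
   Rabs (f (vadd x (vscale t v)) - f x - t * inner (g x) v) <= eps * t * vnorm v.
Proof. intros Hg He. destruct (Hg x eps He) as [del [Hd H]].
  pose proof (vnorm_nonneg d v).
  exists (Rmin 1 (del / (vnorm v + 1))). split.
  - split. apply Rmin_glb_lt. lra. apply Rdiv_lt_0_compat; lra. apply Rmin_l.
  - intros t Ht. specialize (H (vscale t v)). rewrite inner_scale_r, vnorm_scale in H.
    rewrite Rabs_right in H by lra.
    replace (eps * t * vnorm v) with (eps * (t * vnorm v)) by ring.
    apply H.
    assert (t <= del / (vnorm v + 1)) by (eapply Rle_trans; [apply Ht | apply Rmin_r]).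
    assert (t * (vnorm v + 1) <= del).
    { apply Rmult_le_reg_r with (/ (vnorm v + 1)). apply Rinv_0_lt_compat; lra.
      replace (t * (vnorm v + 1) * / (vnorm v + 1)) with t by (field; lra). exact H1. }
    nra.
Qed.

Lemma grad_ineq d (f : vec d -> R) g x y : convex f -> is_gradient f g ->
  f x + inner (g x) (vsub y x) <= f y.
Proof. intros Hc Hg. set (v := vsub y x).
  apply (le_eps _ _ (vnorm v)). apply vnorm_nonneg.
  intros eps He. destruct (dir_lemma d f g x v eps Hg He) as [t0 [Ht0 H]].
  specialize (H t0 (conj (proj1 Ht0) (Rle_refl _))).
  specialize (Hc y x t0 (conj (Rlt_le _ _ (proj1 Ht0)) (proj2 Ht0))).
  replace (vadd (vscale t0 y) (vscale (1 - t0) x)) with (vadd x (vscale t0 v)) in Hc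
    by (apply vec_eq; intro c; unfold vadd, vscale, v, vsub; ring).
  apply Rabs_le_between in H.
  assert (t0 * inner (g x) v <= t0 * (f y - f x + eps * vnorm v)) by lra.
  apply Rmult_le_reg_l in H0; lra.
Qed.

Lemma strong_ineq d (f : vec d -> R) g lam x y : strongly_convex lam f -> is_gradient f g ->
  0 <= lam -> f x + inner (g x) (vsub y x) + lam / 2 * sq (vsub y x) <= f y.
Proof. intros Hc Hg Hl. set (v := vsub y x).
  apply (le_eps _ _ (vnorm v + lam / 2 * sq v)).
  { pose proof (vnorm_nonneg d v). pose proof (sq_nonneg d v). nra. }
  intros eps He. destruct (dir_lemma d f g x v eps Hg He) as [t0 [Ht0 H]].
  set (t := Rmin t0 eps).
  assert (Ht: 0 < t <= t0). { split. apply Rmin_glb_lt; lra. apply Rmin_l. }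
  assert (Hte: t <= eps) by apply Rmin_r.
  specialize (H t Ht).
  specialize (Hc y x t (conj (Rlt_le _ _ (proj1 Ht)) (Rle_trans _ _ _ (proj2 Ht) (proj2 Ht0)))).
  replace (vadd (vscale t y) (vscale (1 - t) x)) with (vadd x (vscale t v)) in Hc
    by (apply vec_eq; intro c; unfold vadd, vscale, v, vsub; ring).
  fold v in Hc. rewrite vnorm_sq in Hc.
  apply Rabs_le_between in H.
  pose proof (sq_nonneg d v).
  assert (t * (f x + inner (g x) v + lam / 2 * sq v) <= t * (f y + eps * (vnorm v + lam / 2 * sq v))).
  { assert (lam / 2 * t * (1 - t) * sq v >= lam/2 * t * sq v - t * (eps * (lam/2 * sq v))).
    { assert (0 <= lam / 2 * sq v) by nra.
      assert (t * t * (lam/2 * sq v) <= t * eps * (lam/2*sq v)).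
      { apply Rmult_le_compat_r; auto. apply Rmult_le_compat_l; lra. }
      nra. }
    nra. }
  apply Rmult_le_reg_l in H1; lra.
Qed.

Lemma min_grad_zero d (f : vec d -> R) g xs : is_gradient f g -> (forall y, f xs <= f y) ->
  g xs = (fun _ => 0).
Proof. intros Hg Hm. apply sq_zero. set (G := g xs).
  apply Rle_antisym; [|apply sq_nonneg].
  set (v := vscale (-1) G).
  apply (le_eps _ _ (vnorm v)). apply vnorm_nonneg.
  intros eps He. destruct (dir_lemma d f g xs v eps Hg He) as [t0 [Ht0 H]].
  specialize (H t0 (conj (proj1 Ht0) (Rle_refl _))).
  specialize (Hm (vadd xs (vscale t0 v))).
  assert (E: inner G v = - sq G) by (unfold v, sq; rewrite inner_scale_r; ring).
  fold G in H. rewrite E in H.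
  apply Rabs_le_between in H.
  assert (t0 * sq G <= t0 * (0 + eps * vnorm v)) by lra.
  apply Rmult_le_reg_l in H0; lra.
Qed.

Lemma line_deriv d (f : vec d -> R) g x v t : is_gradient f g ->
  derivable_pt_lim (fun t => f (vadd x (vscale t v))) t (inner (g (vadd x (vscale t v))) v).
Proof. intro Hg. intros eps He.
  pose proof (vnorm_nonneg d v) as Hnv.
  set (p := vadd x (vscale t v)).
  assert (He': 0 < eps / (vnorm v + 1)) by (apply Rdiv_lt_0_compat; lra).
  destruct (Hg p _ He') as [del [Hd H]].
  assert (Hd': 0 < del / (vnorm v + 1)) by (apply Rdiv_lt_0_compat; lra).
  exists (mkposreal _ Hd'). simpl. intros h Hh0 Hh.
  specialize (H (vscale h v)).
  replace (vadd p (vscale h v)) with (vadd x (vscale (t + h) v)) in H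
    by (apply vec_eq; intro c; unfold p, vadd, vscale; ring).
  rewrite inner_scale_r, vnorm_scale in H.
  assert (Hlt: Rabs h * vnorm v < del).
  { assert (Rabs h * (vnorm v + 1) < del).
    { apply Rmult_lt_reg_r with (/ (vnorm v + 1)). apply Rinv_0_lt_compat; lra.
      replace (Rabs h * (vnorm v + 1) * / (vnorm v + 1)) with (Rabs h) by (field; lra).
      replace (del * / (vnorm v + 1)) with (del / (vnorm v + 1)) by (unfold Rdiv; ring). exact Hh. }
    pose proof (Rabs_pos h). nra. }
  specialize (H Hlt). fold p.
  assert (Hah: 0 < Rabs h) by (apply Rabs_pos_lt; auto).
  replace ((f (vadd x (vscale (t + h) v)) - f p) / h - inner (g p) v)
    with ((f (vadd x (vscale (t + h) v)) - f p - h * inner (g p) v) / h) by (field; auto).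
  unfold Rdiv. rewrite Rabs_mult, Rabs_inv.
  apply Rle_lt_trans with (eps / (vnorm v + 1) * (Rabs h * vnorm v) * / Rabs h).
  { apply Rmult_le_compat_r. left; apply Rinv_0_lt_compat; auto. exact H. }
  replace (eps / (vnorm v + 1) * (Rabs h * vnorm v) * / Rabs h) with (eps * (vnorm v / (vnorm v + 1)))
    by (field; lra).
  assert (vnorm v / (vnorm v + 1) < 1).
  { apply Rmult_lt_reg_r with (vnorm v + 1); [lra|]. unfold Rdiv.
    rewrite Rmult_assoc, Rinv_l by lra. lra. }
  nra.
Qed.

Lemma descent d (f : vec d -> R) g L x y : is_gradient f g -> lipschitz_map L g -> 0 < L ->
  f y <= f x + inner (g x) (vsub y x) + L / 2 * sq (vsub y x).
Proof. intros Hg Hl HL. set (v := vsub y x). set (l0 := inner (g x) v). set (s := sq v).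
  set (phi := fun t => f (vadd x (vscale t v))).
  set (p := fun t : R => l0 * t + (L / 2 * s) * (t * t)).
  assert (Hp: forall t, derivable_pt_lim p t (l0 + L * s * t)).
  { intro t. apply is_derive_Reals. unfold p. auto_derive. auto. field. }
  assert (Hd: forall t, derivable_pt_lim (fun t => phi t - p t) t
                 (inner (g (vadd x (vscale t v))) v - (l0 + L * s * t))).
  { intro t. apply (derivable_pt_lim_minus phi p). apply line_deriv; auto. apply Hp. }
  destruct (MVT_cor2 (fun t => phi t - p t) _ 0 1 Rlt_0_1 (fun c _ => Hd c)) as [c [Hc Hc01]].
  set (u := vsub (g (vadd x (vscale c v))) (g x)).
  assert (Hu: sq u <= L^2 * (c^2 * s)).
  { unfold u. eapply Rle_trans. apply lip_sq; eauto.
    replace (vsub (vadd x (vscale c v)) x) with (vscale c v)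
      by (apply vec_eq; intro; unfold vsub, vadd, vscale; ring).
    rewrite sq_scale. fold s. lra. }
  assert (Hin: inner u v <= L * c * s).
  { pose proof (sq_nonneg d (vsub u (vscale (L * c) v))) as H0.
    rewrite sq_sub, sq_scale, inner_scale_r in H0. fold s in H0.
    assert (HLc: 0 < L * c) by nra.
    assert (H2: 2 * (L * c) * inner u v <= 2 * (L * c) * (L * c * s)) by nra.
    apply Rmult_le_reg_l in H2; nra. }
  unfold u in Hin. rewrite inner_sub_l in Hin. fold l0 in Hin.
  assert (Hneg: phi 1 - p 1 - (phi 0 - p 0) <= 0).
  { rewrite Hc. nra. }
  unfold phi, p in Hneg.
  replace (vadd x (vscale 1 v)) with y in Hneg by (apply vec_eq; intro; unfold v, vadd, vscale, vsub; ring).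
  replace (vadd x (vscale 0 v)) with x in Hneg by (apply vec_eq; intro; unfold v, vadd, vscale, vsub; ring).
  fold s. fold v l0. lra.
Qed.

Lemma cocoercive d (f : vec d -> R) g L x y : convex f -> is_gradient f g -> lipschitz_map L g ->
  sq (vsub (g y) (g x)) <= 2 * L * (f y - f x - inner (g x) (vsub y x)).
Proof. intros Hc Hg Hl.
  pose proof (grad_ineq d f g x y Hc Hg) as HD.
  destruct (Rlt_le_dec 0 L) as [HL|HL].
  - set (u := vsub (g y) (g x)).
    set (w := vsub y (vscale (/ L) u)).
    pose proof (descent d f g L y w Hg Hl HL) as H1.
    pose proof (grad_ineq d f g x w Hc Hg) as H2.
    replace (vsub w y) with (vscale (- / L) u) in H1
      by (apply vec_eq; intro; unfold w, vsub, vscale; ring).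
    replace (vsub w x) with (vsub (vsub y x) (vscale (/ L) u)) in H2
      by (apply vec_eq; intro; unfold w, vsub, vscale; ring).
    rewrite inner_scale_r, sq_scale in H1. rewrite inner_sub_r, inner_scale_r in H2.
    assert (E: inner (g y) u - inner (g x) u = sq u) by (unfold sq, u; rewrite inner_sub_l; ring).
    assert (/ L * sq u - L / 2 * ((- / L)^2 * sq u) <= f y - f x - inner (g x) (vsub y x)) by nra.
    replace (/ L * sq u - L / 2 * ((- / L)^2 * sq u)) with (/ (2 * L) * sq u) in H by (field; lra).
    apply Rmult_le_reg_l with (/ (2 * L)). apply Rinv_0_lt_compat; lra.
    replace (/ (2 * L) * (2 * L * (f y - f x - inner (g x) (vsub y x))))
      with (f y - f x - inner (g x) (vsub y x)) by (field; lra). lra.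
  - pose proof (Hl y x) as H. pose proof (vnorm_nonneg d (vsub (g y) (g x))).
    pose proof (vnorm_nonneg d (vsub y x)).
    assert (Hz: vnorm (vsub (g y) (g x)) = 0) by nra.
    assert (Hs: sq (vsub (g y) (g x)) = 0) by (rewrite <- vnorm_sq, Hz; ring).
    rewrite Hs.
    destruct (Req_dec L 0) as [HL0|HL0]; [subst; lra|].
    assert (H3: vnorm (vsub y x) = 0) by nra.
    assert (Hyx: vsub y x = (fun _ => 0)) by (apply sq_zero; rewrite <- vnorm_sq, H3; ring).
    assert (y = x). { apply vec_eq. intro c. pose proof (f_equal (fun h => h c) Hyx) as H4. simpl in H4.
      unfold vsub in H4. lra. }
    subst y. rewrite Hyx, inner_sym, inner_zero_l. lra.
Qed.

Lemma rsum_ext n F G : (forall i, (i < n)%nat -> F i = G i) -> rsum n F = rsum n G.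
Proof. induction n; intro H; simpl; auto. rewrite IHn by (intros; apply H; lia). rewrite H by lia. auto. Qed.
Lemma rsum_add n F G : rsum n (fun i => F i + G i) = rsum n F + rsum n G.
Proof. induction n; simpl; [ring|]. rewrite IHn; ring. Qed.
Lemma rsum_scale n a F : rsum n (fun i => a * F i) = a * rsum n F.
Proof. induction n; simpl; [ring|]. rewrite IHn; ring. Qed.
Lemma rsum_sub n F G : rsum n (fun i => F i - G i) = rsum n F - rsum n G.
Proof. induction n; simpl; [ring|]. rewrite IHn; ring. Qed.
Lemma rsum_le n F G : (forall i, (i < n)%nat -> F i <= G i) -> rsum n F <= rsum n G.
Proof. induction n; intro H; simpl; [lra|]. pose proof (H n (Nat.lt_succ_diag_r n)).
  assert (rsum n F <= rsum n G) by (apply IHn; intros; apply H; lia). lra. Qed.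
Lemma rsum_nonneg n F : (forall i, (i < n)%nat -> 0 <= F i) -> 0 <= rsum n F.
Proof. intro H. replace 0 with (rsum n (fun _ => 0)). apply rsum_le; auto.
  clear H; induction n; simpl; auto. rewrite IHn; ring. Qed.
Lemma rsum_const n a : rsum n (fun _ => a) = INR n * a.
Proof. induction n; simpl rsum; [simpl; ring|]. rewrite IHn, S_INR. ring. Qed.
Lemma rsum_swap n m F : rsum n (fun i => rsum m (fun j => F i j)) = rsum m (fun j => rsum n (fun i => F i j)).
Proof. induction n; simpl. 
  - clear F. induction m; simpl; auto. rewrite <- IHm; ring.
  - rewrite IHn. rewrite <- rsum_add. auto. Qed.
Lemma rsum_fsum n d (F : nat -> Fin.t d -> R) :
  rsum n (fun i => fsum d (F i)) = fsum d (fun c => rsum n (fun i => F i c)).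
Proof. induction n; simpl.
  - clear F. induction d; simpl; auto. rewrite <- IHd. ring.
  - rewrite IHn. rewrite <- fsum_add. auto. Qed.
Lemma inner_vsumn_l n d (F : nat -> vec d) w :
  inner (vsumn n F) w = rsum n (fun l => inner (F l) w).
Proof. unfold inner, vsumn. rewrite rsum_fsum. apply fsum_ext. intro c.
  rewrite Rmult_comm, <- rsum_scale. apply rsum_ext. intros; ring. Qed.
Lemma rsum_ind n l A B : (l < n)%nat ->
  rsum n (fun i => if Nat.eqb l i then A else B) = A + (INR n - 1) * B.
Proof. induction n; intro H; [lia|]. simpl rsum. rewrite S_INR.
  destruct (Nat.eq_dec l n).
  - subst. rewrite Nat.eqb_refl. rewrite (rsum_ext n _ (fun _ => B)).
    rewrite rsum_const. ring. intros i Hi. destruct (Nat.eqb_spec n i); [lia|auto].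
  - rewrite IHn by lia. destruct (Nat.eqb_spec l n); [lia|]. ring. Qed.

Lemma grad_plus d (f1 f2 : vec d -> R) g1 g2 : is_gradient f1 g1 -> is_gradient f2 g2 ->
  is_gradient (fun x => f1 x + f2 x) (fun x => vadd (g1 x) (g2 x)).
Proof. intros H1 H2 x eps He.
  destruct (H1 x (eps/2)) as [d1 [Hd1 K1]]; [lra|].
  destruct (H2 x (eps/2)) as [d2 [Hd2 K2]]; [lra|].
  exists (Rmin d1 d2). split. apply Rmin_glb_lt; auto.
  intros h Hh. rewrite inner_add_l.
  specialize (K1 h (Rlt_le_trans _ _ _ Hh (Rmin_l _ _))).
  specialize (K2 h (Rlt_le_trans _ _ _ Hh (Rmin_r _ _))).
  apply Rabs_le_between in K1. apply Rabs_le_between in K2.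
  apply Rabs_le. lra. Qed.

Lemma grad_scale d (f : vec d -> R) g a : is_gradient f g ->
  is_gradient (fun x => a * f x) (fun x => vscale a (g x)).
Proof. intros H x eps He.
  assert (He': 0 < eps / (Rabs a + 1)) by (apply Rdiv_lt_0_compat; [lra| pose proof (Rabs_pos a); lra]).
  destruct (H x _ He') as [dl [Hdl K]]. exists dl. split; auto. intros h Hh.
  specialize (K h Hh). rewrite inner_scale_l.
  replace (a * f (vadd x h) - a * f x - a * inner (g x) h) with (a * (f (vadd x h) - f x - inner (g x) h)) by ring.
  rewrite Rabs_mult.
  pose proof (Rabs_pos a). pose proof (vnorm_nonneg d h).
  apply Rle_trans with (Rabs a * (eps / (Rabs a + 1) * vnorm h)).
  apply Rmult_le_compat_l; auto.
  replace (Rabs a * (eps / (Rabs a + 1) * vnorm h)) with (eps * vnorm h * (Rabs a / (Rabs a + 1))) by (field; lra).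
  assert (Rabs a / (Rabs a + 1) <= 1).
  { apply Rmult_le_reg_r with (Rabs a + 1); [lra|]. unfold Rdiv. rewrite Rmult_assoc, Rinv_l by lra. lra. }
  assert (0 <= eps * vnorm h) by nra. nra. Qed.

Lemma grad_sum d n (fs : nat -> vec d -> R) g : (forall i, (i < n)%nat -> is_gradient (fs i) (g i)) ->
  is_gradient (fun x => rsum n (fun i => fs i x)) (fun x => vsumn n (fun l => g l x)).
Proof. induction n; intro H.
  - intros x eps He. exists 1. split; [lra|]. intros h _.
    assert (Hz: inner (vsumn 0 (fun l => g l x)) h = 0).
    { unfold inner, vsumn. simpl. transitivity (0 * fsum d h). rewrite <- fsum_scale. apply fsum_ext; intro; ring. ring. }
    rewrite Hz. simpl rsum. replace (0-0-0) with 0 by ring.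
    rewrite Rabs_R0. pose proof (vnorm_nonneg d h). nra.
  - simpl. apply (grad_plus d _ _ _ _ (IHn (fun i Hi => H i (Nat.lt_lt_succ_r _ _ Hi))) (H n (Nat.lt_succ_diag_r n))).
Qed.

Lemma grad_favg d n (fs : nat -> vec d -> R) g : (forall i, (i < n)%nat -> is_gradient (fs i) (g i)) ->
  is_gradient (favg n fs) (fun x => vscale (/ INR n) (vsumn n (fun l => g l x))).
Proof. intro H. apply grad_scale. apply grad_sum. auto. Qed.

Definition Dfun {d} (fs : nat -> vec d -> R) (g : nat -> vec d -> vec d) (xs : vec d) i y :=
  fs i y - fs i xs - inner (g i xs) (vsub y xs).
Definition Gf {d} n (g : nat -> vec d -> vec d) x := vscale (/ INR n) (vsumn n (fun l => g l x)).
Definition HS {d} n fs g xs (S : nat -> bool) (al : nat -> vec d) :=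
  / INR n * rsum n (fun l => if S l then Dfun fs g xs l (al l) else 0).
Definition HN {d} n fs g xs (S : nat -> bool) (xt : vec d) :=
  / INR n * rsum n (fun l => if S l then 0 else Dfun fs g xs l xt).

Lemma INR_pos n : (1 <= n)%nat -> 0 < INR n.
Proof. intro; apply lt_0_INR; lia. Qed.

Lemma D_nonneg d (fs : nat -> vec d -> R) g xs i y : convex (fs i) -> is_gradient (fs i) (g i) ->
  0 <= Dfun fs g xs i y.
Proof. intros. unfold Dfun. pose proof (grad_ineq d (fs i) (g i) xs y H H0). lra. Qed.

Lemma sumg0 d n (fs : nat -> vec d -> R) g xs : (1 <= n)%nat ->
  (forall i, (i < n)%nat -> is_gradient (fs i) (g i)) -> (forall y, favg n fs xs <= favg n fs y) ->
  vsumn n (fun l => g l xs) = (fun _ => 0).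
Proof. intros Hn Hg Hm.
  pose proof (min_grad_zero d _ _ xs (grad_favg d n fs g Hg) Hm) as H.
  apply vec_eq. intro c. pose proof (f_equal (fun h => h c) H) as H1. simpl in H1. unfold vscale in H1.
  pose proof (INR_pos n Hn).
  apply Rmult_eq_reg_l with (/ INR n). cbv beta. rewrite Rmult_0_r. exact H1. apply Rgt_not_eq, Rinv_0_lt_compat; auto. Qed.

Lemma favg_D d n (fs : nat -> vec d -> R) g xs y : (1 <= n)%nat ->
  vsumn n (fun l => g l xs) = (fun _ => 0) ->
  favg n fs y - favg n fs xs = / INR n * rsum n (fun i => Dfun fs g xs i y).
Proof. intros Hn H0. unfold favg, Dfun. rewrite !rsum_sub.
  assert (rsum n (fun i => inner (g i xs) (vsub y xs)) = 0).
  { rewrite <- inner_vsumn_l, H0. apply inner_zero_l. }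
  rewrite H. ring. Qed.

Lemma var_le d n (b : nat -> vec d) : (1 <= n)%nat ->
  / INR n * rsum n (fun i => sq (vsub (b i) (vscale (/ INR n) (vsumn n b))))
  <= / INR n * rsum n (fun i => sq (b i)).
Proof. intro Hn. pose proof (INR_pos n Hn). set (V := vsumn n b).
  rewrite (rsum_ext n _ (fun i => sq (b i) + (- 2 / INR n) * inner (b i) V + (/ INR n) ^ 2 * sq V)).
  2:{ intros. rewrite sq_sub, inner_scale_r, sq_scale. unfold Rdiv. ring. }
  rewrite !rsum_add, rsum_scale, rsum_const.
  rewrite <- (inner_vsumn_l n d b V). fold V. fold (sq V).
  pose proof (sq_nonneg d V).
  assert (/ INR n * (- 2 / INR n * sq V + INR n * ((/ INR n) ^ 2 * sq V)) = - (/ INR n)^2 * sq V)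
    by (field; lra).
  assert (0 <= (/ INR n)^2 * sq V) by (apply Rmult_le_pos; auto; apply pow2_ge_0).
  rewrite Rmult_plus_distr_l, Rmult_plus_distr_l. rewrite Rplus_assoc, <- Rmult_plus_distr_l, H1. lra.
Qed.

Lemma HN_bound d n (fs : nat -> vec d -> R) g xs S xt L : (1 <= n)%nat ->
  (forall i, (i < n)%nat -> convex (fs i)) ->
  (forall i, (i < n)%nat -> is_gradient (fs i) (g i)) ->
  (forall i, (i < n)%nat -> lipschitz_map L (g i)) ->
  L * HN n fs g xs S xt <= L * (/ INR n * rsum n (fun i => Dfun fs g xs i xt)).
Proof. intros Hn Hc Hg Hl. pose proof (INR_pos n Hn). unfold HN.
  destruct (Rle_dec 0 L).
  - apply Rmult_le_compat_l; auto. apply Rmult_le_compat_l. left; apply Rinv_0_lt_compat; auto.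
    apply rsum_le. intros i Hi. destruct (S i); [apply D_nonneg; auto|lra].
  - assert (Hz: forall i, (i < n)%nat -> Dfun fs g xs i xt = 0).
    { intros i Hi. pose proof (D_nonneg d fs g xs i xt (Hc i Hi) (Hg i Hi)).
      pose proof (cocoercive d (fs i) (g i) L xs xt (Hc i Hi) (Hg i Hi) (Hl i Hi)).
      pose proof (sq_nonneg d (vsub (g i xt) (g i xs))). unfold Dfun in *. nra. }
    rewrite (rsum_ext n _ (fun _ => 0)), (rsum_ext n (fun i => Dfun fs g xs i xt) (fun _ => 0)).
    lra. intros; apply Hz; auto. intros i Hi; destruct (S i); auto.
Qed.

Lemma inner_vsumn_r n d (F : nat -> vec d) w :
  inner w (vsumn n F) = rsum n (fun l => inner w (F l)).
Proof. rewrite inner_sym, inner_vsumn_l. apply rsum_ext; intros; apply inner_sym. Qed.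

Definition vi {d} n (g : nat -> vec d -> vec d) (al : nat -> vec d) x i :=
  vadd (vsub (g i x) (g i (al i))) (vscale (/ INR n) (vsumn n (fun l => g l (al l)))).

Lemma step_dist d n eta (g : nat -> vec d -> vec d) al x xs : (1 <= n)%nat ->
  / INR n * rsum n (fun i => sq (vsub (step_x n eta g al x i) xs))
  = sq (vsub x xs) - 2 * eta * inner (Gf n g x) (vsub x xs)
    + eta ^ 2 * (/ INR n * rsum n (fun i => sq (vi n g al x i))).
Proof. intro Hn. pose proof (INR_pos n Hn).
  set (w := vsub x xs). set (A := vsumn n (fun l => g l (al l))).
  rewrite (rsum_ext n _ (fun i => sq w + (-2*eta) * inner w (g i x) + (2*eta) * inner w (g i (al i))
        + (-2*eta*/INR n) * inner w A + eta^2 * sq (vi n g al x i))).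
  2:{ intros i Hi. unfold step_x.
      replace (vsub (vsub x (vscale eta (vadd (vsub (g i x) (g i (al i))) (vscale (/ INR n) (vsumn n (fun l => g l (al l))))))) xs)
        with (vsub w (vscale eta (vi n g al x i))) by (apply vec_eq; intro; unfold w, vi, vsub, vscale, vadd; ring).
      rewrite sq_sub, sq_scale, inner_scale_r. unfold vi. rewrite inner_add_r, inner_sub_r, inner_scale_r.
      fold A. ring. }
  rewrite !rsum_add, !rsum_scale, !rsum_const.
  rewrite <- (inner_vsumn_r n d (fun i => g i x) w), <- (inner_vsumn_r n d (fun i => g i (al i)) w).
  fold A. unfold Gf. rewrite inner_scale_l, (inner_sym _ (vsumn n (fun l => g l x)) w).
  field. lra.
Qed.

Lemma sum_sq_v d n (g : nat -> vec d -> vec d) al x xs beta : (1 <= n)%nat -> 0 < beta ->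
  vsumn n (fun l => g l xs) = (fun _ => 0) ->
  / INR n * rsum n (fun i => sq (vi n g al x i))
  <= (1 + beta) * (/ INR n * rsum n (fun i => sq (vsub (g i x) (g i xs))))
     + (1 + / beta) * (/ INR n * rsum n (fun i => sq (vsub (g i (al i)) (g i xs)))).
Proof. intros Hn Hb H0. pose proof (INR_pos n Hn).
  set (b := fun i => vsub (g i (al i)) (g i xs)).
  assert (E: forall i, vi n g al x i = vsub (vsub (g i x) (g i xs)) (vsub (b i) (vscale (/ INR n) (vsumn n b)))).
  { intro i. apply vec_eq. intro c. unfold vi, b, vsub, vadd, vscale, vsumn.
    rewrite rsum_sub. pose proof (f_equal (fun h => h c) H0) as H1. simpl in H1. unfold vsumn in H1.
    rewrite H1. ring. }
  apply Rle_trans with (/ INR n * rsum n (fun i => (1 + beta) * sq (vsub (g i x) (g i xs))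
       + (1 + / beta) * sq (vsub (b i) (vscale (/ INR n) (vsumn n b))))).
  { apply Rmult_le_compat_l. left; apply Rinv_0_lt_compat; auto.
    apply rsum_le. intros i Hi. rewrite E. apply young; auto. }
  rewrite rsum_add, !rsum_scale.
  pose proof (var_le d n b Hn).
  assert (0 < 1 + / beta) by (pose proof (Rinv_0_lt_compat _ Hb); lra).
  assert ((1 + / beta) * (/ INR n * rsum n (fun i => sq (vsub (b i) (vscale (/ INR n) (vsumn n b)))))
    <= (1 + / beta) * (/ INR n * rsum n (fun i => sq (b i)))) by (apply Rmult_le_compat_l; lra).
  unfold b in *. nra.
Qed.

Lemma sum_sq_a d n (fs : nat -> vec d -> R) g xs x L : (1 <= n)%nat ->
  (forall i, (i < n)%nat -> convex (fs i)) ->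
  (forall i, (i < n)%nat -> is_gradient (fs i) (g i)) ->
  (forall i, (i < n)%nat -> lipschitz_map L (g i)) ->
  / INR n * rsum n (fun i => sq (vsub (g i x) (g i xs)))
  <= 2 * L * (/ INR n * rsum n (fun i => Dfun fs g xs i x)).
Proof. intros Hn Hc Hg Hl. pose proof (INR_pos n Hn).
  replace (2 * L * (/ INR n * rsum n (fun i => Dfun fs g xs i x)))
    with (/ INR n * (2 * L * rsum n (fun i => Dfun fs g xs i x))) by ring.
  apply Rmult_le_compat_l. left; apply Rinv_0_lt_compat; auto.
  rewrite <- rsum_scale. apply rsum_le. intros i Hi. apply cocoercive; auto.
Qed.

Lemma sum_sq_b d n (fs : nat -> vec d -> R) g xs S al xt L : (1 <= n)%nat ->
  (forall i, (i < n)%nat -> convex (fs i)) ->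
  (forall i, (i < n)%nat -> is_gradient (fs i) (g i)) ->
  (forall i, (i < n)%nat -> lipschitz_map L (g i)) ->
  (forall i, (i < n)%nat -> S i = false -> al i = xt) ->
  / INR n * rsum n (fun i => sq (vsub (g i (al i)) (g i xs)))
  <= 2 * L * (HS n fs g xs S al + HN n fs g xs S xt).
Proof. intros Hn Hc Hg Hl Hal. pose proof (INR_pos n Hn).
  apply Rle_trans with (/ INR n * rsum n (fun i => 2 * L * Dfun fs g xs i (al i))).
  { apply Rmult_le_compat_l. left; apply Rinv_0_lt_compat; auto.
    apply rsum_le. intros i Hi. apply cocoercive; auto. }
  unfold HS, HN. rewrite <- Rmult_plus_distr_l, <- rsum_add, rsum_scale.
  rewrite (rsum_ext n (fun i => Dfun fs g xs i (al i))
     (fun l => (if S l then Dfun fs g xs l (al l) else 0) + (if S l then 0 else Dfun fs g xs l xt))).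
  right; ring.
  intros i Hi. destruct (S i) eqn:ES. ring. rewrite Hal; auto. ring.
Qed.

Lemma hs_step d n (fs : nat -> vec d -> R) g xs S al x : (1 <= n)%nat ->
  / INR n * rsum n (fun i => HS n fs g xs S (step_al S al x i))
  = (1 - / INR n) * HS n fs g xs S al + / INR n * HS n fs g xs S (fun _ => x).
Proof. intro Hn. pose proof (INR_pos n Hn). unfold HS.
  rewrite rsum_scale, rsum_swap.
  rewrite (rsum_ext n _ (fun l => (if S l then Dfun fs g xs l x else 0)
       + (INR n - 1) * (if S l then Dfun fs g xs l (al l) else 0))).
  2:{ intros l Hl. unfold step_al. destruct (S l) eqn:ES; simpl.
      - rewrite <- (rsum_ind n l) by auto. apply rsum_ext. intros i _. destruct (l =? i); auto.
      - rewrite rsum_const. ring. }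
  rewrite rsum_add, rsum_scale. field. lra.
Qed.

Lemma HS_le_D d n (fs : nat -> vec d -> R) g xs S x : (1 <= n)%nat ->
  (forall i, (i < n)%nat -> convex (fs i)) ->
  (forall i, (i < n)%nat -> is_gradient (fs i) (g i)) ->
  0 <= HS n fs g xs S (fun _ => x) <= / INR n * rsum n (fun i => Dfun fs g xs i x).
Proof. intros Hn Hc Hg. pose proof (INR_pos n Hn). assert (0 < / INR n) by (apply Rinv_0_lt_compat; auto).
  unfold HS. split.
  - apply Rmult_le_pos; [lra|]. apply rsum_nonneg. intros i Hi. destruct (S i); [apply D_nonneg; auto|lra].
  - apply Rmult_le_compat_l; [lra|]. apply rsum_le. intros i Hi. destruct (S i); [lra|apply D_nonneg; auto].
Qed.

Lemma HS_nonneg d n (fs : nat -> vec d -> R) g xs S al : (1 <= n)%nat ->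
  (forall i, (i < n)%nat -> convex (fs i)) ->
  (forall i, (i < n)%nat -> is_gradient (fs i) (g i)) ->
  0 <= HS n fs g xs S al.
Proof. intros Hn Hc Hg. pose proof (INR_pos n Hn). assert (0 < / INR n) by (apply Rinv_0_lt_compat; auto).
  unfold HS. apply Rmult_le_pos; [lra|]. apply rsum_nonneg. intros i Hi. destruct (S i); [apply D_nonneg; auto|lra].
Qed.

Lemma one_step d n (fs : nat -> vec d -> R) g L lam c beta kappa eta S xs al x xt :
  (1 <= n)%nat ->
  (forall i, (i < n)%nat -> convex (fs i)) ->
  (forall i, (i < n)%nat -> is_gradient (fs i) (g i)) ->
  (forall i, (i < n)%nat -> lipschitz_map L (g i)) ->
  0 < lam -> strongly_convex lam (favg n fs) ->
  (forall y, favg n fs xs <= favg n fs y) ->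
  0 < c -> 0 < beta -> 1 < kappa -> 0 < eta ->
  / kappa + 2 * L * c * eta ^ 2 * (1 + / beta) <= / INR n ->
  (forall i, (i < n)%nat -> S i = false -> al i = xt) ->
  / INR n * rsum n (fun i => c * sq (vsub (step_x n eta g al x i) xs) + HS n fs g xs S (step_al S al x i))
  <= (1 - / kappa) * (c * sq (vsub x xs) + HS n fs g xs S al)
     - (2 * c * eta * (1 - L * eta * (1 + beta)) - / INR n - 2 * c / (kappa * lam))
         * (favg n fs x - favg n fs xs)
     + 2 * c * L * eta ^ 2 * (1 + / beta) * (favg n fs xt - favg n fs xs).
Proof. intros Hn Hc Hg Hl Hlam Hsc Hmin Hc0 Hb Hk He Hcond Hal.
  pose proof (INR_pos n Hn) as Hnp.
  pose proof (sumg0 d n fs g xs Hn Hg Hmin) as H0.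
  pose proof (grad_favg d n fs g Hg) as HG.
  rewrite rsum_add, rsum_scale, Rmult_plus_distr_l.
  replace (/ INR n * (c * rsum n (fun i => sq (vsub (step_x n eta g al x i) xs))))
    with (c * (/ INR n * rsum n (fun i => sq (vsub (step_x n eta g al x i) xs)))) by ring.
  rewrite step_dist by auto. rewrite hs_step by auto.
  set (sqx := sq (vsub x xs)).
  set (I := inner (Gf n g x) (vsub x xs)).
  set (V := / INR n * rsum n (fun i => sq (vi n g al x i))).
  set (SA := / INR n * rsum n (fun i => sq (vsub (g i x) (g i xs)))).
  set (SB := / INR n * rsum n (fun i => sq (vsub (g i (al i)) (g i xs)))).
  set (Hs := HS n fs g xs S al).
  set (Hx := HS n fs g xs S (fun _ => x)).
  set (Hnn := HN n fs g xs S xt).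
  set (Fx := favg n fs x - favg n fs xs).
  set (Ft := favg n fs xt - favg n fs xs).
  assert (EFx: Fx = / INR n * rsum n (fun i => Dfun fs g xs i x)) by (apply favg_D; auto).
  assert (EFt: Ft = / INR n * rsum n (fun i => Dfun fs g xs i xt)) by (apply favg_D; auto).
  assert (K1: Fx + lam / 2 * sqx <= I).
  { pose proof (strong_ineq d (favg n fs) _ lam x xs Hsc HG (Rlt_le _ _ Hlam)) as K.
    replace (vsub xs x) with (vscale (-1) (vsub x xs)) in K by (apply vec_eq; intro; unfold vscale, vsub; ring).
    rewrite inner_scale_r, sq_scale in K. unfold I, Gf, Fx, sqx. lra. }
  assert (K2: lam / 2 * sqx <= Fx).
  { pose proof (strong_ineq d (favg n fs) _ lam xs x Hsc HG (Rlt_le _ _ Hlam)) as K.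
    cbv beta in K. rewrite H0, inner_scale_l, inner_zero_l in K. unfold Fx, sqx. lra. }
  assert (K3: V <= (1 + beta) * SA + (1 + / beta) * SB) by (apply sum_sq_v; auto).
  assert (K4: SA <= 2 * L * Fx) by (rewrite EFx; apply sum_sq_a; auto).
  assert (K5: SB <= 2 * L * (Hs + Hnn)) by (apply sum_sq_b; auto).
  assert (K6: L * Hnn <= L * Ft) by (rewrite EFt; apply HN_bound; auto).
  destruct (HS_le_D d n fs g xs S x Hn Hc Hg) as [K7a K7b]. fold Hx in K7a, K7b. rewrite <- EFx in K7b.
  assert (K8: 0 <= Hs) by (apply HS_nonneg; auto).
  assert (K9: 0 <= sqx) by apply sq_nonneg.
  assert (Hib: 0 < / beta) by (apply Rinv_0_lt_compat; auto).
  assert (Hik: 0 < / kappa < 1).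
  { split. apply Rinv_0_lt_compat; lra. rewrite <- Rinv_1. apply Rinv_lt_contravar; lra. }
  assert (Hin: 0 < / INR n) by (apply Rinv_0_lt_compat; auto).
  set (C2 := c * eta ^ 2).
  assert (HC2: 0 < C2) by (unfold C2; apply Rmult_lt_0_compat; [lra| apply pow_lt; lra]).
  assert (e1: C2 * V <= C2 * ((1 + beta) * SA + (1 + / beta) * SB)) by (apply Rmult_le_compat_l; lra).
  assert (e2: C2 * (1 + beta) * SA <= C2 * (1 + beta) * (2 * L * Fx)) by (apply Rmult_le_compat_l; nra).
  assert (e3: C2 * (1 + / beta) * SB <= C2 * (1 + / beta) * (2 * L * (Hs + Hnn))) by (apply Rmult_le_compat_l; nra).
  assert (e4: C2 * (1 + / beta) * 2 * (L * Hnn) <= C2 * (1 + / beta) * 2 * (L * Ft)) by (apply Rmult_le_compat_l; nra).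
  assert (e5: c * eta * Fx <= c * eta * I).
  { apply Rmult_le_compat_l. nra. assert (0 <= lam / 2 * sqx) by nra. lra. }
  assert (e6: c * sqx <= (1 - / kappa) * (c * sqx) + 2 * c / (kappa * lam) * Fx).
  { assert (2 * c / (kappa * lam) * (lam / 2 * sqx) <= 2 * c / (kappa * lam) * Fx).
    { apply Rmult_le_compat_l; auto. left. apply Rdiv_lt_0_compat; nra. }
    replace (2 * c / (kappa * lam) * (lam / 2 * sqx)) with (/ kappa * (c * sqx)) in H by (field; lra).
    lra. }
  assert (e7: (1 - / INR n + 2 * L * c * eta ^ 2 * (1 + / beta)) * Hs <= (1 - / kappa) * Hs)
    by (apply Rmult_le_compat_r; lra).
  assert (e8: / INR n * Hx <= / INR n * Fx) by (apply Rmult_le_compat_l; lra).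
  unfold C2 in *.
  nra.
Qed.

Lemma epoch_mono d n eta (g : nat -> vec d -> vec d) S r x al hist K1 K2 : (1 <= n)%nat ->
  (forall h a, K1 h a <= K2 h a) ->
  epoch_E n eta g S r x al hist K1 <= epoch_E n eta g S r x al hist K2.
Proof. intros Hn HK. pose proof (INR_pos n Hn). revert x al hist. induction r; intros; simpl; auto.
  apply Rmult_le_compat_l. left; apply Rinv_0_lt_compat; auto.
  apply rsum_le. intros; apply IHr. Qed.

Lemma epoch_scale d n eta (g : nat -> vec d -> vec d) S r x al hist K s :
  epoch_E n eta g S r x al hist (fun h a => s * K h a) = s * epoch_E n eta g S r x al hist K.
Proof. revert x al hist. induction r; intros; simpl; auto.
  rewrite (rsum_ext n _ (fun i => s * epoch_E n eta g S r (step_x n eta g al x i) (step_al S al x i) (hist ++ x :: nil) K)).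
  rewrite rsum_scale. ring. intros; apply IHr. Qed.

Lemma geo1 q m : rsum m (fun i => q ^ i) * (1 - q) = 1 - q ^ m.
Proof. induction m; simpl rsum. simpl; ring. rewrite Rmult_plus_distr_r, IHm. simpl. ring. Qed.

Lemma geo2 q m : rsum m (fun l => q ^ (m - (l + 1))) * (1 - q) = 1 - q ^ m.
Proof. induction m. simpl; ring. cbn [rsum].
  rewrite (rsum_ext m _ (fun l => q * q ^ (m - (l + 1)))).
  rewrite rsum_scale. replace (S m - (m + 1))%nat with 0%nat by lia.
  replace ((q * rsum m (fun l => q ^ (m - (l + 1))) + q ^ 0) * (1 - q))
    with (q * (rsum m (fun l => q ^ (m - (l + 1))) * (1 - q)) + (1 - q)) by (simpl; ring).
  rewrite IHm. simpl. ring.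
  intros i Hi. replace (S m - (i + 1))%nat with (S (m - (i + 1))) by lia. simpl. ring.
Qed.

Lemma epoch_bound d n m (fs : nat -> vec d -> R) g L lam c beta kappa eta S xs xt :
  (1 <= n)%nat ->
  (forall i, (i < n)%nat -> convex (fs i)) ->
  (forall i, (i < n)%nat -> is_gradient (fs i) (g i)) ->
  (forall i, (i < n)%nat -> lipschitz_map L (g i)) ->
  0 < lam -> strongly_convex lam (favg n fs) ->
  (forall y, favg n fs xs <= favg n fs y) ->
  0 < c -> 0 < beta -> 1 < kappa -> 0 < eta ->
  / kappa + 2 * L * c * eta ^ 2 * (1 + / beta) <= / INR n ->
  forall r x al hist, (length hist + r)%nat = m ->
  (forall i, (i < n)%nat -> S i = false -> al i = xt) ->
  epoch_E n eta g S r x al hist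
    (fun h a => (2 * c * eta * (1 - L * eta * (1 + beta)) - / INR n - 2 * c / (kappa * lam))
                 * rsum m (fun l => (1 - / kappa) ^ (m - (l + 1)) * (favg n fs (nth l h xt) - favg n fs xs))
                + HS n fs g xs S a)
  <= (1 - / kappa) ^ r * (c * sq (vsub x xs) + HS n fs g xs S al)
     + (2 * c * eta * (1 - L * eta * (1 + beta)) - / INR n - 2 * c / (kappa * lam))
        * rsum (length hist) (fun l => (1 - / kappa) ^ (m - (l + 1)) * (favg n fs (nth l hist xt) - favg n fs xs))
     + 2 * c * L * eta ^ 2 * (1 + / beta) * (favg n fs xt - favg n fs xs) * rsum r (fun i => (1 - / kappa) ^ i).
Proof. intros Hn Hc Hg Hl Hlam Hsc Hmin Hc0 Hb Hk He Hcond.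
  pose proof (INR_pos n Hn) as Hnp.
  set (q := 1 - / kappa). set (g0 := 2 * c * eta * (1 - L * eta * (1 + beta)) - / INR n - 2 * c / (kappa * lam)).
  set (Cc := 2 * c * L * eta ^ 2 * (1 + / beta) * (favg n fs xt - favg n fs xs)).
  set (Fv := fun y => favg n fs y - favg n fs xs).
  assert (Hq: 0 <= q). { unfold q. assert (/ kappa < 1). rewrite <- Rinv_1. apply Rinv_lt_contravar; lra. lra. }
  induction r; intros x al hist Hlen Hal.
  - simpl. rewrite Nat.add_0_r in Hlen. rewrite Hlen. pose proof (sq_nonneg d (vsub x xs)). nra.
  - simpl epoch_E.
    eapply Rle_trans.
    { apply Rmult_le_compat_l. left; apply Rinv_0_lt_compat; auto.
      apply rsum_le. intros i Hi. apply IHr.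
      rewrite length_app. simpl. lia.
      intros l Hl0 HS0. unfold step_al. rewrite HS0. simpl. auto. }
    rewrite length_app. simpl length. rewrite Nat.add_1_r. simpl rsum.
    rewrite (rsum_ext (length hist) (fun l => q ^ (m - (l + 1)) * (favg n fs (nth l (hist ++ x :: nil) xt) - favg n fs xs))
       (fun l => q ^ (m - (l + 1)) * (favg n fs (nth l hist xt) - favg n fs xs))).
    2:{ intros l Hl0. rewrite app_nth1; auto. }
    rewrite nth_middle. replace (m - (length hist + 1))%nat with r by lia.
    set (R0 := rsum (length hist) (fun l => q ^ (m - (l + 1)) * (favg n fs (nth l hist xt) - favg n fs xs))).
    set (Rr := rsum r (fun i => q ^ i)).
    rewrite !rsum_add, rsum_scale, !rsum_const.
    pose proof (one_step d n fs g L lam c beta kappa eta S xs al x xt Hn Hc Hg Hl Hlam Hsc Hmin Hc0 Hb Hk He Hcond Hal) as H1.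
    fold q g0 Cc in H1.
    set (Ssum := rsum n (fun i => c * sq (vsub (step_x n eta g al x i) xs) + HS n fs g xs S (step_al S al x i))) in *.
    assert (H2: q ^ r * (/ INR n * Ssum)
       <= q ^ r * (q * (c * sq (vsub x xs) + HS n fs g xs S al) - g0 * (favg n fs x - favg n fs xs) + Cc)).
    { apply Rmult_le_compat_l; auto. apply pow_le; auto. }
    set (X := g0 * (R0 + q ^ r * (favg n fs x - favg n fs xs))).
    set (Y := Cc * Rr).
    assert (E: / INR n * (q ^ r * Ssum + INR n * X + INR n * Y) = q ^ r * (/ INR n * Ssum) + X + Y) by (field; lra).
    rewrite E. unfold X, Y. simpl pow. lra.
Qed.

Lemma strong_dist d n (fs : nat -> vec d -> R) g lam xs x : (1 <= n)%nat ->
  (forall i, (i < n)%nat -> is_gradient (fs i) (g i)) ->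
  0 < lam -> strongly_convex lam (favg n fs) ->
  (forall y, favg n fs xs <= favg n fs y) ->
  lam / 2 * sq (vsub x xs) <= favg n fs x - favg n fs xs.
Proof. intros Hn Hg Hlam Hsc Hmin.
  pose proof (sumg0 d n fs g xs Hn Hg Hmin) as H0.
  pose proof (grad_favg d n fs g Hg) as HG.
  pose proof (strong_ineq d (favg n fs) _ lam xs x Hsc HG (Rlt_le _ _ Hlam)) as K.
  cbv beta in K. rewrite H0, inner_scale_l, inner_zero_l in K. lra. Qed.

Lemma main_ind n d m (fs : nat -> vec d -> R) (g : nat -> vec d -> vec d)
  (L lam c beta kappa eta : R) (S : nat -> bool) (xs : vec d) :
  (1 <= n)%nat -> (1 <= m)%nat ->
  (forall i, (i < n)%nat -> convex (fs i)) ->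
  (forall i, (i < n)%nat -> is_gradient (fs i) (g i)) ->
  (forall i, (i < n)%nat -> lipschitz_map L (g i)) ->
  0 < lam -> strongly_convex lam (favg n fs) ->
  (forall y, favg n fs xs <= favg n fs y) ->
  0 < c -> 0 < beta -> 1 < kappa -> 0 < eta ->
  / kappa + 2 * L * c * eta ^ 2 * (1 + / beta) <= / INR n ->
  0 < hsag_gamma n m L lam c beta kappa eta ->
  forall k xt al,
    hsag_gamma n m L lam c beta kappa eta *
      hsag_E n m eta kappa g S (fun y => favg n fs y - favg n fs xs) k xt al
    <= hsag_theta n m L lam c beta kappa eta ^ k *
       (hsag_gamma n m L lam c beta kappa eta * (favg n fs xt - favg n fs xs) + HS n fs g xs S al).
Proof. intros Hn Hm Hc Hg Hl Hlam Hsc Hmin Hc0 Hb Hk He Hcond Hgam.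
  set (gam := hsag_gamma n m L lam c beta kappa eta) in *.
  set (th := hsag_theta n m L lam c beta kappa eta).
  set (q := 1 - / kappa).
  set (g0 := 2 * c * eta * (1 - L * eta * (1 + beta)) - / INR n - 2 * c / (kappa * lam)).
  set (Z := rsum m (fun l => q ^ (m - (l + 1)))).
  pose proof (INR_pos n Hn) as Hnp.
  assert (Hik: 0 < / kappa < 1).
  { split. apply Rinv_0_lt_compat; lra. rewrite <- Rinv_1. apply Rinv_lt_contravar; lra. }
  assert (Hq: 0 < q < 1) by (unfold q; lra).
  assert (Hqm: 0 < q ^ m < 1).
  { split. apply pow_lt; lra. apply pow_lt_1_compat. lra. lia. }
  assert (HZ: Z = kappa * (1 - q ^ m)).
  { pose proof (geo2 q m) as G. fold Z in G. assert (Eq1: 1 - q = / kappa) by (unfold q; ring). rewrite Eq1 in G.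
    apply Rmult_eq_reg_r with (/ kappa). rewrite G. field. lra. apply Rgt_not_eq. lra. }
  assert (HZp: 0 < Z) by (rewrite HZ; apply Rmult_lt_0_compat; lra).
  assert (Hgam_eq: gam = Z * g0) by (unfold gam, hsag_gamma; rewrite HZ; fold q; fold g0; ring).
  assert (Hth0: 0 <= th).
  { apply Rle_trans with (q ^ m). lra. unfold th, hsag_theta. fold q. cbv zeta. apply Rmax_r. }
  assert (HFnn: forall y, 0 <= favg n fs y - favg n fs xs) by (intro y; specialize (Hmin y); lra).
  induction k; intros xt al.
  - simpl. pose proof (HS_nonneg d n fs g xs S al Hn Hc Hg). lra.
  - cbn [hsag_E].
    set (al0 := fun l => if S l then al l else xt).
    rewrite <- epoch_scale.
    set (KK := fun (h : list (vec d)) (a : nat -> vec d) =>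
       g0 * rsum m (fun l => q ^ (m - (l + 1)) * (favg n fs (nth l h xt) - favg n fs xs)) + HS n fs g xs S a).
    eapply Rle_trans.
    { apply (epoch_mono d n eta g S m xt al0 nil _ (fun h a => th ^ k * KK h a) Hn).
      intros h a. unfold KK.
      rewrite <- rsum_scale.
      apply Rle_trans with (rsum m (fun l => hsag_p kappa m (l + 1) *
           (th ^ k * (gam * (favg n fs (nth l h xt) - favg n fs xs) + HS n fs g xs S a)))).
      { apply rsum_le. intros l Hl0.
        assert (0 <= hsag_p kappa m (l + 1)).
        { unfold hsag_p. fold q. apply Rmult_le_pos. apply pow_le; lra. left; apply Rinv_0_lt_compat. exact HZp. }
        specialize (IHk (nth l h xt) a). nra. }
      right.
      rewrite (rsum_ext m _ (fun l => th ^ k * g0 * (q ^ (m - (l + 1)) * (favg n fs (nth l h xt) - favg n fs xs))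
                 + th ^ k * HS n fs g xs S a * (q ^ (m - (l + 1)) / Z))).
      rewrite rsum_add, !rsum_scale.
      assert (E1: rsum m (fun l => q ^ (m - (l + 1)) / Z) = 1).
      { unfold Rdiv. rewrite (rsum_ext m _ (fun l => / Z * q ^ (m - (l + 1)))) by (intros; ring).
        rewrite rsum_scale. fold Z. field. lra. }
      rewrite E1. ring.
      intros l Hl0. unfold hsag_p. fold q. fold Z. rewrite Hgam_eq. field. lra. }
    rewrite epoch_scale.
    replace (th ^ Datatypes.S k) with (th ^ k * th) by (simpl; ring).
    rewrite Rmult_assoc.
    apply Rmult_le_compat_l. apply pow_le; auto.
    eapply Rle_trans.
    { apply (epoch_bound d n m fs g L lam c beta kappa eta S xs xt Hn Hc Hg Hl Hlam Hsc Hmin Hc0 Hb Hk He Hcond m xt al0 nil).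
      simpl; lia. intros i Hi HS0. unfold al0. rewrite HS0. auto. }
    fold q g0. simpl length. simpl rsum.
    assert (EH: HS n fs g xs S al0 = HS n fs g xs S al).
    { unfold HS. f_equal. apply rsum_ext. intros l _. unfold al0. destruct (S l); auto. }
    rewrite EH.
    set (Zi := rsum m (fun i => q ^ i)).
    assert (HZi: Zi = kappa * (1 - q ^ m)).
    { pose proof (geo1 q m) as G. fold Zi in G.
      assert (Eq1: 1 - q = / kappa) by (unfold q; ring). rewrite Eq1 in G.
      apply Rmult_eq_reg_r with (/ kappa). rewrite G. field. lra. apply Rgt_not_eq. lra. }
    set (Fx := favg n fs xt - favg n fs xs).
    set (Hs := HS n fs g xs S al).
    assert (HFx: 0 <= Fx) by apply HFnn.
    assert (HHs: 0 <= Hs) by (apply HS_nonneg; auto).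
    assert (Hsq: c * sq (vsub xt xs) <= 2 * c / lam * Fx).
    { pose proof (strong_dist d n fs g lam xs xt Hn Hg Hlam Hsc Hmin). fold Fx in H.
      assert (2 * c / lam * (lam / 2 * sq (vsub xt xs)) <= 2 * c / lam * Fx).
      { apply Rmult_le_compat_l; auto. left. apply Rdiv_lt_0_compat; lra. }
      replace (2 * c / lam * (lam / 2 * sq (vsub xt xs))) with (c * sq (vsub xt xs)) in H0 by (field; lra).
      exact H0. }
    set (th1 := 2 * c / (gam * lam) * q ^ m + 2 * L * c * eta ^ 2 / gam * (1 + / beta) * kappa * (1 - q ^ m)).
    assert (Hth1: th1 <= th) by (unfold th, hsag_theta; fold gam q; apply Rmax_l).
    assert (Hthq: q ^ m <= th) by (unfold th, hsag_theta; fold gam q; apply Rmax_r).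
    assert (E2: th1 * gam = 2 * c / lam * q ^ m + 2 * c * L * eta ^ 2 * (1 + / beta) * Zi).
    { unfold th1. rewrite HZi. field. lra. }
    assert (A1: q ^ m * (c * sq (vsub xt xs)) <= q ^ m * (2 * c / lam * Fx)) by (apply Rmult_le_compat_l; lra).
    assert (A2: th1 * gam * Fx <= th * gam * Fx).
    { apply Rmult_le_compat_r; auto. apply Rmult_le_compat_r; lra. }
    assert (A3: q ^ m * Hs <= th * Hs) by (apply Rmult_le_compat_r; lra).
    rewrite E2 in A2. nra.
Qed.

Theorem corollary1
  (n d m : nat) (fs : nat -> vec d -> R) (g : nat -> vec d -> vec d)
  (L lam c beta kappa eta : R) (Sset : nat -> bool) (xstar x0 : vec d) :
  (1 <= n)%nat -> (1 <= m)%nat ->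
  (forall i, (i < n)%nat -> convex (fs i)) ->
  (forall i, (i < n)%nat -> is_gradient (fs i) (g i)) ->
  (forall i, (i < n)%nat -> lipschitz_map L (g i)) ->
  0 < lam -> strongly_convex lam (favg n fs) ->
  (forall y, favg n fs xstar <= favg n fs y) ->
  0 < c -> 0 < beta -> 1 < kappa -> 0 < eta ->
  / kappa + 2 * L * c * eta ^ 2 * (1 + / beta) <= / INR n ->
  0 < hsag_gamma n m L lam c beta kappa eta ->
  hsag_theta n m L lam c beta kappa eta < 1 ->
  hsag_theta n m L lam c beta kappa eta * (1 + / hsag_gamma n m L lam c beta kappa eta) < 1 ->
  forall k : nat,
    hsag_E n m eta kappa g Sset (fun y => favg n fs y - favg n fs xstar) k x0 (fun _ => x0)
    <= (hsag_theta n m L lam c beta kappa eta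
        * (1 + / hsag_gamma n m L lam c beta kappa eta)) ^ k
       * (favg n fs x0 - favg n fs xstar).
Proof.
  intros Hn Hm Hc Hg Hl Hlam Hsc Hmin Hc0 Hb Hk He Hcond Hgam Hth Hthb k.
  pose proof (main_ind n d m fs g L lam c beta kappa eta Sset xstar Hn Hm Hc Hg Hl Hlam Hsc Hmin Hc0 Hb Hk He Hcond Hgam k x0 (fun _ => x0)) as H.
  set (gam := hsag_gamma n m L lam c beta kappa eta) in *.
  set (th := hsag_theta n m L lam c beta kappa eta) in *.
  set (E := hsag_E n m eta kappa g Sset (fun y => favg n fs y - favg n fs xstar) k x0 (fun _ => x0)) in *.
  set (F0 := favg n fs x0 - favg n fs xstar) in *.
  assert (HF0: 0 <= F0) by (unfold F0; specialize (Hmin x0); lra).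
  destruct k as [|k].
  - unfold E. simpl. fold F0. lra.
  - assert (Hth0: 0 <= th).
    { apply Rle_trans with ((1 - / kappa) ^ m). apply pow_le.
      assert (/ kappa < 1) by (rewrite <- Rinv_1; apply Rinv_lt_contravar; lra). lra.
      unfold th, hsag_theta. cbv zeta. apply Rmax_r. }
    destruct (HS_le_D d n fs g xstar Sset x0 Hn Hc Hg) as [_ HH].
    rewrite <- (favg_D d n fs g xstar x0 Hn (sumg0 d n fs g xstar Hn Hg Hmin)) in HH. fold F0 in HH.
    assert (H1: gam * E <= th ^ Datatypes.S k * (gam * F0 + F0)).
    { eapply Rle_trans; [exact H|]. apply Rmult_le_compat_l. apply pow_le; auto. lra. }
    assert (H2: E <= th ^ Datatypes.S k * (1 + / gam) * F0).
    { apply Rmult_le_reg_l with gam; auto.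
      replace (gam * (th ^ Datatypes.S k * (1 + / gam) * F0)) with (th ^ Datatypes.S k * (gam * F0 + F0)) by (field; lra).
      exact H1. }
    assert (Hg1: 1 <= 1 + / gam) by (pose proof (Rinv_0_lt_compat _ Hgam); lra).
    assert (H3: (1 + / gam) ^ 1 <= (1 + / gam) ^ Datatypes.S k) by (apply Rle_pow; auto; lia).
    rewrite Rpow_mult_distr.
    eapply Rle_trans; [exact H2|].
    apply Rmult_le_compat_r; auto. apply Rmult_le_compat_l. apply pow_le; auto.
    rewrite pow_1 in H3. exact H3.
Qed.
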